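(* Let $\Gamma=(V,E)$ be a simple graph of order $n$ and minimum degree $\delta$, and let $\mu_*$ be the Laplacian spectral radius of $\Gamma$. Then the global offensive alliance number of $\Gamma$ satisfies $$\gamma_{a_o}(\Gamma)\ge \left\lceil\frac{n}{\mu_*}\left\lceil\frac{\delta +1}{2}\right\rceil\right\rceil$$ and the global strong offensive alliance number of $\Gamma$ satisfies $$\gamma_{\hat{a}_o}(\Gamma)\ge \left\lceil\frac{n}{\mu_*}\left(\left\lceil\frac{\delta }{2}\right\rceil+1\right)\right\rceil.$$
   Context: For $S\subseteq V$ and $v\in V$, $N_S(v)=\{u\in S: u\sim v\}$ and $N_{V\setminus S}(v)=\{u\in V\setminus S: u\sim v\}$. A nonempty set $S\subseteq V$ is a global offensive alliance if $|N_S(v)|\ge |N_{V\setminus S}(v)|+1$ for every $v\in V\setminus S$, and a global strong offensive alliance if $|N_S(v)|\ge |N_{V\setminus S}(v)|+2$ for every $v\in V\setminus S$. $\gamma_{a_o}(\Gamma)$ (resp. $\gamma_{\hat a_o}(\Gamma)$) is the minimum cardinality of a global offensive (resp. global strong offensive) alliance. The Laplacian spectral radius is the largest eigenvalue of the Laplacian matrix of $\Gamma$. *)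

(* Defs.v *)
From mathcomp Require Import all_boot all_order all_algebra.
From mathcomp Require Import reals.
Set Implicit Arguments. Unset Strict Implicit. Unset Printing Implicit Defensive.
Import Order.TTheory GRing.Theory Num.Theory.

Definition simple_graph (n : nat) (e : rel 'I_n) : Prop :=
  symmetric e /\ irreflexive e.

Definition nbhd_in (n : nat) (e : rel 'I_n) (S : {set 'I_n}) (v : 'I_n) : {set 'I_n} :=
  [set u in S | e u v].

Definition deg (n : nat) (e : rel 'I_n) (v : 'I_n) : nat := #|[set u | e u v]|.

(* minimum degree (the default #|'I_n| is irrelevant for n >= 1 since degrees are < n) *)
Definition min_deg (n : nat) (e : rel 'I_n) : nat :=
  \big[minn/n]_(v : 'I_n) deg e v.

Definition global_offensive_alliance (n : nat) (e : rel 'I_n) (S : {set 'I_n}) : bool :=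
  (S != set0) &&
  [forall v in ~: S, #|nbhd_in e S v| >= #|nbhd_in e (~: S) v| + 1].

Definition global_strong_offensive_alliance (n : nat) (e : rel 'I_n) (S : {set 'I_n}) : bool :=
  (S != set0) &&
  [forall v in ~: S, #|nbhd_in e S v| >= #|nbhd_in e (~: S) v| + 2].

(* minimum cardinality; setT is always an alliance when n >= 1, so the
   default value n never matters in that case *)
Definition goa_number (n : nat) (e : rel 'I_n) : nat :=
  \big[minn/n]_(S : {set 'I_n} | global_offensive_alliance e S) #|S|.

Definition gsoa_number (n : nat) (e : rel 'I_n) : nat :=
  \big[minn/n]_(S : {set 'I_n} | global_strong_offensive_alliance e S) #|S|.

Definition laplacian (R : realType) (n : nat) (e : rel 'I_n) : 'M[R]_n :=
  \matrix_(i, j) (if i == j then (deg e i)%:R else if e i j then -1 else 0)%R.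

Definition lap_spectral_radius (R : realType) (n : nat) (e : rel 'I_n) (mu : R) : Prop :=
  eigenvalue (laplacian R e) mu /\
  (forall a : R, eigenvalue (laplacian R e) a -> (a <= mu)%R).

(* Main.v *)
Require Import Defs.
From mathcomp Require Import all_boot all_order all_algebra.
From mathcomp Require Import reals complex.
From mathcomp Require Import ring lra.
Set Implicit Arguments. Unset Strict Implicit. Unset Printing Implicit Defensive.
Import Order.TTheory GRing.Theory Num.Theory.
Local Open Scope ring_scope.
Local Open Scope sesquilinear_scope.
Section QF.
Variable R : realType.
Local Notation C := (R[i]).
Local Notation f := (real_complex R).

Lemma QF n (A : 'M[R]_n) (mu : R) : A^T = A ->
  (forall a, eigenvalue A a -> a <= mu) ->
  forall x : 'rV[R]_n, (x *m A *m x^T) 0 0 <= mu * (x *m x^T) 0 0.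
Proof.
move=> Asym Hmu x.
pose AC := map_mx f A.
have herm : AC \is hermsymmx.
  apply/is_hermitianmxP; rewrite expr0 scale1r.
  apply/matrixP => i j; rewrite !mxE.
  have -> : A j i = A i j by rewrite -{1}Asym mxE.
  by rewrite -[RHS]/(conjc _) conjc_real.
have /orthomx_spectralP ACeq := hermitian_normalmx herm.
have dreal := hermitian_spectral_diag_real herm.
set P := spectralmx AC in ACeq.
set d := spectral_diag AC in ACeq dreal.
have Pu : P \is unitarymx := spectral_unitarymx AC.
have Punit : P \in unitmx := spectral_unit AC.
have invP : invmx P = P^t* := invmx_unitary Pu.
have PAC : P *m AC = diag_mx d *m P.
  by rewrite {1}ACeq !mulmxA mulmxV // mul1mx.
have dle : forall j, d 0 j <= f mu.
  move=> j.
  have ev : eigenvalue AC (d 0 j).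
    apply/eigenvalueP; exists (row j P).
      rewrite -row_mul PAC mul_diag_mx.
      by apply/rowP => k; rewrite !mxE.
    apply/negP => /eqP r0.
    have : (P *m P^t*) j j = 1.
      by move/unitarymxP: Pu => ->; rewrite mxE eqxx.
    move=> H1; have : (row j P *m P^t*) 0 j = 1.
      by rewrite -row_mul mxE.
    by rewrite r0 mul0mx mxE => /eqP; rewrite eq_sym oner_eq0.
  have dr : d 0 j \is Num.real := mxOverP dreal 0 j.
  rewrite -(RRe_real dr) lecR; apply: Hmu.
  rewrite eigenvalue_root_char -(fmorph_root f) map_char_poly -eigenvalue_root_char.
  by move: ev; rewrite -{1}(RRe_real dr).
pose X := map_mx f x.
have XC : X^t* = X^T.
  by apply/matrixP => i j; rewrite !mxE -[LHS]/(conjc _) conjc_real.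
pose Y := X *m P^t*.
have YC : Y^t* = P *m X^t*.
  by rewrite /Y trmx_mul map_mxM trmxCK.
have e1 : f ((x *m A *m x^T) 0 0) = (Y *m diag_mx d *m Y^t*) 0 0.
  have -> : (Y *m diag_mx d *m Y^t*) = X *m AC *m X^t*.
    by rewrite YC /Y ACeq invP !mulmxA.
  rewrite XC map_trmx -!map_mxM.
  by rewrite [RHS]mxE.
have e2 : f ((x *m x^T) 0 0) = (Y *m Y^t*) 0 0.
  have -> : (Y *m Y^t*) = X *m X^t*.
    by rewrite YC /Y -mulmxA (mulmxA _ P) -invP mulVmx // mul1mx.
  by rewrite XC map_trmx -!map_mxM [RHS]mxE.
rewrite -lecR rmorphM /= e1 e2 mul_mx_diag !mxE mulr_sumr.
apply: ler_sum => j _; rewrite !mxE mulrAC [_ * (_ * _)]mulrC.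
apply: ler_wpM2l; last exact: dle.
by rewrite -normCK exprn_ge0.
Qed.
End QF.

Local Close Scope sesquilinear_scope.

Section G.
Variable R : realType.
Variable n : nat.
Variable e : rel 'I_n.
Hypothesis Hs : simple_graph e.

Lemma card_sep (A : {set 'I_n}) v :
  #|[set u in A | e u v]| = (\sum_(u in A) (e u v : nat))%N.
Proof.
rewrite -sum1_card [RHS]big_mkcond [LHS]big_mkcond /=.
by apply: eq_bigr => i _; rewrite !inE; case: (i \in A); case: (e i v).
Qed.

Lemma deg_sum v : (deg e v)%:R = \sum_i ((e i v)%:R : R).
Proof.
have -> : deg e v = (\sum_(u in [set: 'I_n]) (e u v : nat))%N.
  by rewrite -card_sep /deg; apply: eq_card => i; rewrite !inE.
by rewrite natr_sum; apply: eq_bigl => i; rewrite inE.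
Qed.

Lemma lapE i j : laplacian R e i j = (i == j)%:R * (deg e i)%:R - (e i j)%:R.
Proof.
case: Hs => _ irr.
rewrite mxE; case: eqP => [->|_]; first by rewrite irr subr0 mul1r.
case: (e i j) => /=; rewrite mul0r ?sub0r ?subr0 ?oppr0 //.
Qed.

Lemma lap_form (g : 'I_n -> R) :
  ((\row_i g i) *m laplacian R e *m (\row_i g i)^T) 0 0 =
  \sum_j \sum_i (e i j)%:R * (g j * (g j - g i)).
Proof.
rewrite mxE; apply: eq_bigr => j _.
rewrite !mxE mulr_suml.
rewrite (eq_bigr (fun i => (i==j)%:R * (g i * (deg e i)%:R * g j) - (e i j)%:R * (g i * g j))); last first.
  by move=> i _; rewrite lapE !mxE; ring.
rewrite [RHS](eq_bigr (fun i => (e i j)%:R * g j ^+ 2 - (e i j)%:R * (g i * g j))); last first.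
  by move=> i _; ring.
rewrite !sumrB -mulr_suml -deg_sum; congr (_ - _).
rewrite (bigD1 j) //= eqxx mul1r big1 ?addr0; first by ring.
by move=> i /negPf ->; rewrite mul0r.
Qed.

Lemma nb_sum (A : {set 'I_n}) j : #|nbhd_in e A j|%:R = \sum_(i in A) ((e i j)%:R : R).
Proof. by rewrite /nbhd_in card_sep natr_sum. Qed.

Lemma inner (S : {set 'I_n}) (a b : R) (g : 'I_n -> R) j :
  (forall i, g i = if i \in S then a else b) ->
  \sum_i (e i j)%:R * (g j * (g j - g i)) =
  if j \in S then a * (a - b) * #|nbhd_in e (~:S) j|%:R
  else b * (b - a) * #|nbhd_in e S j|%:R.
Proof.
move=> gE; rewrite !nb_sum !mulr_sumr (big_mkcond (fun i => i \in ~: S)) (big_mkcond (fun i => i \in S)).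
case: ifP => jS; apply: eq_bigr => i _; rewrite !gE ?inE jS.
  by case: (i \in S) => /=; ring.
  by case: (i \in S) => /=; ring.
Qed.

Lemma Ksym (S : {set 'I_n}) :
  (\sum_(j in S) #|nbhd_in e (~:S) j| = \sum_(j in ~:S) #|nbhd_in e S j|)%N.
Proof.
rewrite /nbhd_in.
under eq_bigr do rewrite card_sep.
under [RHS]eq_bigr do rewrite card_sep.
rewrite exchange_big /=; apply: eq_bigr => i _; apply: eq_bigr => j _.
by case: Hs => sy _; rewrite sy.
Qed.

Lemma split_sum (S : {set 'I_n}) (F : 'I_n -> R) :
  \sum_j F j = \sum_(j in S) F j + \sum_(j in ~:S) F j.
Proof.
rewrite (bigID (mem S)) /=; congr (_ + _); apply: eq_bigl => j; by rewrite inE.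
Qed.

Lemma cardC_R (S : {set 'I_n}) : (#|~:S|%:R : R) = n%:R - #|S|%:R.
Proof.
have H : (#|S| + #|~:S| = n)%N by rewrite cardsC card_ord.
have : ((#|S| + #|~:S|)%:R : R) = n%:R by rewrite H.
rewrite natrD => H2; lra.
Qed.


Lemma lap_sym : (laplacian R e)^T = laplacian R e.
Proof.
apply/matrixP => i j; rewrite mxE !lapE.
case: Hs => sy _; rewrite sy eq_sym.
by case: eqP => [->|]; rewrite ?mul0r ?mul1r.
Qed.

Lemma cut_bound (S : {set 'I_n}) (mu : R) : (0 < n)%N -> lap_spectral_radius e mu ->
  n%:R * ((\sum_(j in ~:S) #|nbhd_in e S j|)%N)%:R <= mu * (#|S|%:R * (n%:R - #|S|%:R)).
Proof.
move=> n0 [_ Hmu].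
set s : R := #|S|%:R; set K := (\sum_(j in ~:S) _)%N.
pose a : R := n%:R - s; pose b : R := - s.
pose g := fun i => if i \in S then a else b.
have := QF lap_sym Hmu (\row_i g i).
rewrite lap_form.
have gE : forall i, g i = if i \in S then a else b by [].
rewrite (eq_bigr _ (fun j _ => @inner S a b g j gE)) (split_sum S).
rewrite (eq_bigr (fun j => a * (a - b) * #|nbhd_in e (~:S) j|%:R)); last first.
  by move=> j ->.
rewrite [X in _ + X <= _](eq_bigr (fun j => b * (b - a) * #|nbhd_in e S j|%:R)); last first.
  by move=> j; rewrite inE => /negPf ->.
rewrite -!mulr_sumr -!natr_sum Ksym -/K.
have -> : ((\row_i g i) *m (\row_i g i)^T) 0 0 = s * a ^+ 2 + (n%:R - s) * b ^+ 2.
  rewrite mxE (split_sum S).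
  rewrite (eq_bigr (fun j => a ^+ 2)); last by move=> j jS; rewrite !mxE /g jS expr2.
  rewrite [X in _ + X = _](eq_bigr (fun j => b ^+ 2)); last first.
    by move=> j; rewrite inE => /negPf jS; rewrite !mxE /g jS expr2.
  by rewrite !sumr_const -[a ^+ 2 *+ _]mulr_natl -[b ^+ 2 *+ _]mulr_natl cardC_R.
move=> H.
have n0' : (0 : R) < n%:R by rewrite ltr0n.
have E1 : a * (a - b) * K%:R + b * (b - a) * K%:R = n%:R * (n%:R * K%:R) by rewrite /a /b; ring.
have E2 : s * a ^+ 2 + (n%:R - s) * b ^+ 2 = n%:R * (s * (n%:R - s)) by rewrite /a /b; ring.
rewrite E1 E2 mulrCA in H.
by rewrite [mu * _]mulrCA (ler_pM2l n0') in H.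
Qed.

Lemma min_deg_le v : (min_deg e <= deg e v)%N.
Proof.
have H : forall r, v \in r -> (\big[minn/n]_(i <- r) deg e i <= deg e v)%N.
  elim=> [//|i r IH]; rewrite inE big_cons => /orP [/eqP <-|vr].
    exact: geq_minl.
  exact: leq_trans (geq_minr _ _) (IH vr).
exact: H (mem_index_enum v).
Qed.

Lemma dform (M : 'M[R]_n) a b : ((delta_mx 0 a : 'rV[R]_n) *m M *m (delta_mx 0 b : 'rV[R]_n)^T) 0 0 = M a b.
Proof. by rewrite trmx_delta -rowE -colE !mxE. Qed.

Lemma mxE_sub (A B : 'M[R]_(1,1)) : (A - B) 0 0 = A 0 0 - B 0 0.
Proof. by rewrite !mxE. Qed.

Lemma mu_ge (mu : R) : lap_spectral_radius e mu -> 0 < mu -> (min_deg e)%:R + 1 <= mu.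
Proof.
move=> [Hev Hmu] mu0.
case: (pickP (fun p : 'I_n * 'I_n => e p.1 p.2)) => [[u w] /= euw | none].
  set x : 'rV[R]_n := delta_mx 0 u - delta_mx 0 w.
  have := QF lap_sym Hmu x.
  have -> : x *m x^T = x *m 1%:M *m x^T by rewrite mulmx1.
  rewrite /x !linearB /=.
  rewrite !mulmxBl !mxE_sub !dform.
  rewrite !lapE !mxE.
  case: Hs => sy irr.
  have uw : (u == w) = false by apply/negP => /eqP E; move: euw; rewrite E irr.
  rewrite !eqxx uw (eq_sym w u) uw !irr (sy w u) euw /=.
  rewrite !mul1r !mul0r.

  have := min_deg_le u; have := min_deg_le w.
  rewrite -!(ler_nat R) => h1 h2 H.
  lra.
exfalso.
have L0 : laplacian R e = 0.
  apply/matrixP => i j; rewrite lapE deg_sum !mxE.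
  rewrite big1 ?mulr0 ?(none (i, j)) ?subr0 //.
  by move=> k _; rewrite (none (k, i)).
move/eigenvalueP: Hev => [v]; rewrite L0 mulmx0 => /esym /eqP.
rewrite scaler_eq0 => /orP [/eqP m0|/eqP v0 /eqP]; last by [].
by move: mu0; rewrite m0 ltxx.
Qed.
Lemma deg_split (S : {set 'I_n}) v :
  (#|nbhd_in e S v| + #|nbhd_in e (~:S) v|)%N = deg e v.
Proof.
rewrite /nbhd_in !card_sep /deg.
have -> : #|[set u | e u v]| = (\sum_(u in [set: 'I_n]) (e u v : nat))%N.
  by rewrite -card_sep; apply: eq_card => i; rewrite !inE.
rewrite [RHS](bigID (mem S)) /=; congr addn.
  by apply: eq_bigl => i; rewrite !inE.
by apply: eq_bigl => i; rewrite !inE.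
Qed.

Lemma intn (k : nat) : ((k%:Z)%:~R : R) = k%:R.
Proof. by rewrite -pmulrn. Qed.

Lemma key (mu : R) (c : int) (S : {set 'I_n}) : (0 < n)%N -> lap_spectral_radius e mu ->
  0 <= c -> c <= (min_deg e)%:Z + 1 ->
  (forall v, v \notin S -> c <= #|nbhd_in e S v|%:Z) ->
  Num.ceil (n%:R / mu * c%:~R) <= #|S|%:Z.
Proof.
move=> n0 Hsp c0 cle Hv.
rewrite ceil_le_int intn.
have c0R : (0:R) <= c%:~R by rewrite ler0z.
have n0' : (0 : R) < n%:R by rewrite ltr0n.
case: (lerP mu 0) => [mu_le0 | mu_gt0].
  apply: (@le_trans _ _ 0); last by rewrite ler0n.
  apply: mulr_le0_ge0 => //; apply: mulr_ge0_le0; first exact: ltW.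
  by rewrite invr_le0.
have cR : (c%:~R : R) <= (min_deg e)%:R + 1.
  by rewrite -(ler_int R) intrD intn in cle.
have sle : (#|S| <= n)%N by have := max_card S; rewrite card_ord.
rewrite mulrAC ler_pdivrMr //.
case: (eqVneq #|S| n) => [-> | sn].
  apply: ler_wpM2l; first exact: ltW.
  exact: le_trans cR (mu_ge Hsp mu_gt0).
have slt : (#|S| < n)%N by rewrite ltn_neqAle sn sle.
have ns0 : (0 : R) < n%:R - #|S|%:R by rewrite subr_gt0 ltr_nat.
have h2 := cut_bound S n0 Hsp.
have h1 : (n%:R - #|S|%:R) * c%:~R <= ((\sum_(j in ~:S) #|nbhd_in e S j|)%N)%:R :> R.
  rewrite natr_sum -cardC_R mulr_natl -sumr_const.
  apply: ler_sum => j; rewrite inE => /Hv.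
  by rewrite -(ler_int R) intn.
have h3 : (n%:R - #|S|%:R) * (n%:R * c%:~R) <= (n%:R - #|S|%:R) * (#|S|%:R * mu) :> R.
  rewrite mulrCA; apply: le_trans (_ : n%:R * ((\sum_(j in ~:S) #|nbhd_in e S j|)%N)%:R <= _).
    by apply: ler_wpM2l => //; exact: ltW.
  apply: le_trans h2 _; rewrite le_eqVlt; apply/orP; left; apply/eqP; ring.
by rewrite ler_pM2l in h3.
Qed.
End G.

Theorem theorem6 (R : realType) (n : nat) (e : rel 'I_n) (mu : R) :
  (0 < n)%N -> simple_graph e -> lap_spectral_radius e mu ->
  ((goa_number e)%:~R : int) >=
    Num.ceil ((n%:R / mu) * (Num.ceil (((min_deg e)%:R + 1) / 2 : R))%:~R)
  /\
  ((gsoa_number e)%:~R : int) >=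
    Num.ceil ((n%:R / mu) * ((Num.ceil ((min_deg e)%:R / 2 : R))%:~R + 1)).
Proof.
move=> n0 Hs Hsp.
set d := min_deg e.
have keyT : forall c : int, 0 <= c -> c <= d%:Z + 1 ->
    Num.ceil (n%:R / mu * c%:~R) <= n%:Z.
  move=> c c0 cd.
  have := key Hs (S := setT) n0 Hsp c0 cd.
  rewrite cardsT card_ord; apply => v; by rewrite inE.
have minP : forall (c : int) (P : pred {set 'I_n}), 0 <= c -> c <= d%:Z + 1 ->
    (forall S, P S -> Num.ceil (n%:R / mu * c%:~R) <= #|S|%:Z) ->
    Num.ceil (n%:R / mu * c%:~R) <= (\big[minn/n]_(S | P S) #|S|)%N.
  move=> c P c0 cd HS.
  apply: (big_ind (fun k : nat => Num.ceil (n%:R / mu * c%:~R) <= k%:Z)).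
  - exact: keyT.
  - by move=> x y hx hy; rewrite /minn; case: ifP.
  - exact: HS.
have natF : forall (S : {set 'I_n}) (v : 'I_n), v \notin S ->
    [/\ (d%:R <= #|nbhd_in e S v|%:R + #|nbhd_in e (~:S) v|%:R :> R),
         (0 <= d%:R :> R) &
         (forall k, (#|nbhd_in e (~:S) v| + k <= #|nbhd_in e S v|)%N ->
           #|nbhd_in e (~:S) v|%:R + k%:R <= #|nbhd_in e S v|%:R :> R)].
  move=> S v vS; split.
  - by rewrite -natrD deg_split ler_nat min_deg_le.
  - exact: ler0n.
  - by move=> k hk; rewrite -natrD ler_nat.
split.
- rewrite intz.
  have c0 : 0 <= Num.ceil (((d%:R + 1) / 2) : R).
    by rewrite ceil_ge0; have := ler0n R d; lra.
  have cd : Num.ceil (((d%:R + 1) / 2) : R) <= d%:Z + 1.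
    by rewrite ceil_le_int intrD intn mulr1z; have := ler0n R d; lra.
  apply: minP => // S /andP [_ /forallP HS].
  apply: (key Hs (S := S) n0 Hsp c0 cd) => v vS.
  have := HS v; rewrite inE vS /= => hv.
  have [h1 h2 h3] := natF S v vS.
  have := h3 1%N hv.
  rewrite ceil_le_int intn; lra.
- rewrite intz.
  have c0 : 0 <= Num.ceil ((d%:R / 2) : R) + 1.
    by apply: addr_ge0 => //; rewrite ceil_ge0; have := ler0n R d; lra.
  have cd : Num.ceil ((d%:R / 2) : R) + 1 <= d%:Z + 1.
    by rewrite lerD2r ceil_le_int intn; have := ler0n R d; lra.
  have := minP _ (fun S => global_strong_offensive_alliance e S) c0 cd.
  rewrite intrD mulr1z; apply => S /andP [_ /forallP HS].
  have := key Hs (S := S) n0 Hsp c0 cd; rewrite intrD mulr1z; apply => v vS.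
  have := HS v; rewrite inE vS /= => hv.
  have [h1 h2 h3] := natF S v vS.
  have h4 := h3 2%N hv.
  have hc : Num.ceil ((d%:R / 2) : R) <= #|nbhd_in e S v|%:Z - 1.
    by rewrite ceil_le_int intrB intn mulr1z; lra.
  by rewrite lerBrDr in hc.
Qed.
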